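(* In the setting described in the context, assume moreover $b\ge1000\log^2n$. Then: 1. $\|\overline s^{-1}\widetilde\delta_s\|_2\le2\epsilon$, $\|\overline x^{-1}\widetilde\delta_x\|_2\le2\epsilon$, $\|\mathbb E[\overline s^{-1}\widehat\delta_s]\|_2\le2\epsilon$, $\|\mathbb E[\overline x^{-1}\widehat\delta_x]\|_2\le2\epsilon$, $\|\overline\mu^{-1}(\widetilde\delta_t-\overline\delta_t)\|_2\le\epsilon_{\mathrm{mp}}\epsilon$, and $\|\overline\mu^{-1}(\overline\delta_t+\widetilde\delta_\Phi)\|_2\le5\epsilon$. 2. For every $i\in[n]$: $\operatorname{Var}[\overline x_i^{-1}\widehat\delta_{x,i}]\le2\epsilon^2/b$ and $\operatorname{Var}[\overline s_i^{-1}\widehat\delta_{s,i}]\le2\epsilon^2/b$. 3. $\|\overline x^{-1}(\overline x-\widetilde x)\|_\infty\le2\epsilon_{\mathrm{mp}}$, $\|\overline s^{-1}(\overline s-\widetilde s)\|_\infty\le2\epsilon_{\mathrm{mp}}$, $\|\overline x^{-1}\widetilde\delta_x\|_\infty\le2\epsilon$, $\|\overline s^{-1}\widetilde\delta_s\|_\infty\le2\epsilon$, and $\|\overline\mu^{-1}\widetilde\delta_\mu\|_\infty\le5\epsilon$. 4. $\|\overline x^{-1}\widehat\delta_x\|_\infty\le3\epsilon$ and $\|\overline s^{-1}\widehat\delta_s\|_\infty\le3\epsilon$ hold with probability $1-1/n^4$.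
   Context: Let $n\ge2$ and $A\in\mathbb{R}^{d\times n}$ have full row rank $d\le n$. Products, quotients, square roots and inverses of vectors are coordinatewise; for $u\in\mathbb{R}^n$, the capital letter $U$ denotes $\operatorname{diag}(u)$. For $u\in\mathbb{R}^n_{>0}$ and $v\in\mathbb{R}^n_{>0}$ (or a scalar $v>0$, identified with $v\mathbf 1$), $u\approx_\gamma v$ means $(1-\gamma)v_i\le u_i\le(1+\gamma)v_i$ for all $i$. Parameters: $\epsilon,\epsilon_{\mathrm{mp}}\in(0,10^{-4})$, $\lambda>\log n$; $\Phi_\lambda(r)=\sum_{i=1}^n\cosh(\lambda r_i)$, with $\nabla\Phi_\lambda(r)=(\lambda\sinh(\lambda r_i))_i$. Let $t>0$, $t^{\mathrm{new}}=(1-\frac{\epsilon}{3\sqrt n})t$. Let $\overline x,\overline s\in\mathbb{R}^n_{>0}$, $\overline w=\overline x/\overline s$, $\overline\mu=\overline x\,\overline s$, $\overline\delta_t=(\frac{t^{\mathrm{new}}}{t}-1)\overline\mu$. Let $\widetilde w,\widetilde\mu\in\mathbb{R}^n_{>0}$ satisfy $\widetilde\mu\approx_{\epsilon_{\mathrm{mp}}}\overline\mu$, $\widetilde w\approx_{\epsilon_{\mathrm{mp}}}\overline w$, and $\overline\mu\approx_{0.1}t$. Define $\widetilde x=\sqrt{\widetilde w\widetilde\mu}$, $\widetilde s=\sqrt{\widetilde\mu/\widetilde w}$, $\widetilde P=\widetilde W^{1/2}A^\top(A\widetilde WA^\top)^{-1}A\widetilde W^{1/2}$, $\widetilde\delta_t=(\frac{t^{\mathrm{new}}}{t}-1)\widetilde\mu$,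 $\widetilde\delta_\Phi=-\frac\epsilon2t^{\mathrm{new}}\frac{\nabla\Phi_\lambda(\widetilde\mu/t-1)}{\|\nabla\Phi_\lambda(\widetilde\mu/t-1)\|_2}$ (the gradient is assumed nonzero), $\widetilde\delta_\mu=\widetilde\delta_t+\widetilde\delta_\Phi$, $\widetilde\delta_x=\widetilde X(\widetilde X\widetilde S)^{-1/2}(I-\widetilde P)(\widetilde X\widetilde S)^{-1/2}\widetilde\delta_\mu$, $\widetilde\delta_s=\widetilde S(\widetilde X\widetilde S)^{-1/2}\widetilde P(\widetilde X\widetilde S)^{-1/2}\widetilde\delta_\mu$. Let $R\in\mathbb{R}^{b\times n}$ be a random subsampled randomized Hadamard transform; it satisfies, for every fixed $h\in\mathbb{R}^n$, every $i$ and every $\delta\in(0,1)$: $\mathbb E[R^\top Rh]=h$, $\mathbb E[(R^\top Rh)_i^2]\le h_i^2+\frac1b\|h\|_2^2$, and $\Pr[|(R^\top Rh)_i-h_i|>\|h\|_2\log(n/\delta)/\sqrt b]\le\delta$. Define $\widehat\delta_x=\widetilde X(\widetilde X\widetilde S)^{-1/2}(I-R^\top R\widetilde P)(\widetilde X\widetilde S)^{-1/2}\widetilde\delta_\mu$ and $\widehat\delta_s=\widetilde S(\widetilde X\widetilde S)^{-1/2}R^\top R\widetilde P(\widetilde X\widetilde S)^{-1/2}\widetilde\delta_\mu$. Expectations, variances and probabilities are over the randomness of $R$; all other quantities are deterministic. *)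

(* Defs.v *)
From HB Require Import structures.
From mathcomp Require Import all_boot all_order all_algebra.
From mathcomp Require Import reals sequences exp.
Set Implicit Arguments. Unset Strict Implicit. Unset Printing Implicit Defensive.
Import Order.TTheory GRing.Theory Num.Theory.
Local Open Scope ring_scope.

Section Vec.
Context {R : realType} {n : nat}.
Implicit Types (u v : 'cV[R]_n).

Definition cvmul u v : 'cV[R]_n := \col_i (u i 0 * v i 0).
Definition cvdiv u v : 'cV[R]_n := \col_i (u i 0 / v i 0).
Definition cvinv u : 'cV[R]_n := \col_i (u i 0)^-1.
Definition cvsqrt u : 'cV[R]_n := \col_i Num.sqrt (u i 0).
Definition dg u : 'M[R]_n := diag_mx u^T.
Definition vpos u : Prop := forall i, 0 < u i 0.
Definition approx u (gamma : R) v : Prop :=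
  forall i, (1 - gamma) * v i 0 <= u i 0 /\ u i 0 <= (1 + gamma) * v i 0.
Definition norm2 u : R := Num.sqrt (\sum_i (u i 0) ^+ 2).
Definition norminf u : R := \big[Num.max/0]_i `|u i 0|.
End Vec.

Definition sinh {R : realType} (x : R) : R := (expR x - expR (- x)) / 2.

(* gradient of Phi_lambda(r) = sum_i cosh(lambda r_i) *)
Definition gradPhi {R : realType} {n : nat} (lam : R) (r : 'cV[R]_n) : 'cV[R]_n :=
  \col_i (lam * sinh (lam * r i 0)).

Section Prob.
Context {R : realType} {Omega : finType} (p : Omega -> R).
Definition Ex (f : Omega -> R) : R := \sum_w p w * f w.
Definition Exv {n : nat} (f : Omega -> 'cV[R]_n) : 'cV[R]_n := \sum_w p w *: f w.
Definition Var (f : Omega -> R) : R := Ex (fun w => (f w - Ex f) ^+ 2).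
Definition Pr (P : pred Omega) : R := \sum_(w | P w) p w.
End Prob.

Section Step.
Context {R : realType} {n d : nat} (A : 'M[R]_(d, n)) (eps lam t : R)
        (wt mut : 'cV[R]_n).

Definition tnew : R := (1 - eps / (3 * Num.sqrt n%:R)) * t.
Definition xtil : 'cV[R]_n := cvsqrt (cvmul wt mut).
Definition stil : 'cV[R]_n := cvsqrt (cvdiv mut wt).
Definition Ptil : 'M[R]_n :=
  dg (cvsqrt wt) *m A^T *m invmx (A *m dg wt *m A^T) *m A *m dg (cvsqrt wt).
Definition dtil_t : 'cV[R]_n := (tnew / t - 1) *: mut.
Definition rvec : 'cV[R]_n := \col_i (mut i 0 / t - 1).
Definition dtil_Phi : 'cV[R]_n :=
  (- (eps / 2 * tnew) / norm2 (gradPhi lam rvec)) *: gradPhi lam rvec.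
Definition dtil_mu : 'cV[R]_n := dtil_t + dtil_Phi.
Definition Dhalf : 'M[R]_n := dg (cvinv (cvsqrt (cvmul xtil stil))).
Definition dtil_x : 'cV[R]_n :=
  dg xtil *m Dhalf *m (1%:M - Ptil) *m Dhalf *m dtil_mu.
Definition dtil_s : 'cV[R]_n :=
  dg stil *m Dhalf *m Ptil *m Dhalf *m dtil_mu.
Definition dhat_x {b : nat} (Rm : 'M[R]_(b, n)) : 'cV[R]_n :=
  dg xtil *m Dhalf *m (1%:M - Rm^T *m Rm *m Ptil) *m Dhalf *m dtil_mu.
Definition dhat_s {b : nat} (Rm : 'M[R]_(b, n)) : 'cV[R]_n :=
  dg stil *m Dhalf *m (Rm^T *m Rm *m Ptil) *m Dhalf *m dtil_mu.
End Step.

Definition mubar {R : realType} {n : nat} (xb sb : 'cV[R]_n) := cvmul xb sb.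
Definition wbar {R : realType} {n : nat} (xb sb : 'cV[R]_n) := cvdiv xb sb.
Definition dbar_t {R : realType} {n : nat} (eps t : R) (xb sb : 'cV[R]_n) : 'cV[R]_n :=
  (tnew (n:=n) eps t / t - 1) *: mubar xb sb.

(* Main.v *)
Require Import Defs.
From HB Require Import structures.
From mathcomp Require Import all_boot all_order all_algebra.
From mathcomp Require Import reals sequences exp.
From mathcomp Require Import ring lra.
Import Order.TTheory GRing.Theory Num.Theory.
Local Open Scope ring_scope.


Section Gen.
Context {R : realType}.

Definition sqn {n} (v : 'cV[R]_n) := \sum_i (v i 0)^+2.

Lemma sqn_ge0 n (v : 'cV[R]_n) : 0 <= sqn v.
Proof. by apply: sumr_ge0 => i _; apply: sqr_ge0. Qed.

Lemma norm2_le n (v : 'cV[R]_n) c : 0 <= c -> sqn v <= c ^+ 2 -> norm2 v <= c.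
Proof.
move=> c0 h; rewrite /norm2 -[c]ger0_norm // -sqrtr_sqr ler_sqrt //.
exact: sqr_ge0.
Qed.

Lemma sqn_tr n (v : 'cV[R]_n) : sqn v = (v^T *m v) 0 0.
Proof. rewrite /sqn !mxE; apply: eq_bigr => i _; by rewrite !mxE expr2. Qed.

Lemma sqn_split n (P : 'M[R]_n) g : P^T = P -> P *m P = P ->
  sqn g = sqn (P *m g) + sqn (g - P *m g).
Proof.
move=> PT PP.
have c1 : (P *m g)^T *m (g - P *m g) = 0.
  by rewrite trmx_mul PT -mulmxA mulmxBr mulmxA PP subrr mulmx0.
have c2 : (g - P *m g)^T *m (P *m g) = 0.
  by rewrite -[LHS]trmxK trmx_mul trmxK c1 trmx0.
rewrite !sqn_tr.
move: c1 c2; set a := P *m g; set b := g - a => c1 c2.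
have -> : g = a + b by rewrite /b addrC subrK.
rewrite linearD /= [(a+b)^T]linearD /= !mulmxDl c1 c2 addr0 add0r.
by rewrite mxE.
Qed.

Lemma sqn_le_split n (P : 'M[R]_n) g : P^T = P -> P *m P = P ->
  sqn (P *m g) <= sqn g /\ sqn (g - P *m g) <= sqn g.
Proof.
move=> PT PP; rewrite (@sqn_split _ _ g PT PP) ?addr0; split.
  by rewrite lerDl sqn_ge0.
by rewrite lerDr sqn_ge0.
Qed.

Lemma norminf_le n (v : 'cV[R]_n) c : 0 <= c -> (forall i, `|v i 0| <= c) ->
  norminf v <= c.
Proof. by move=> c0 h; rewrite /norminf; apply: bigmax_le. Qed.

Lemma coord_le_sqn n (v : 'cV[R]_n) i : (v i 0)^+2 <= sqn v.
Proof.
rewrite /sqn (bigD1 i) //= lerDl; apply: sumr_ge0 => j _; exact: sqr_ge0.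
Qed.

Lemma sqn_bound n (u v : 'cV[R]_n) c : (forall i, (u i 0)^+2 <= c) ->
  sqn (\col_i (u i 0 * v i 0)) <= c * sqn v.
Proof.
move=> h; rewrite /sqn mulr_sumr; apply: ler_sum => i _.
rewrite mxE exprMn; apply: ler_wpM2r; [exact: sqr_ge0| exact: h].
Qed.

End Gen.

Section ProbL.
Context {R : realType} {Omega : finType}.

Lemma Exv_mulmx (p : Omega -> R) m n k (M : 'M[R]_(m, n)) (f : Omega -> 'M[R]_(n, k)) :
  \sum_w p w *: (M *m f w) = M *m \sum_w p w *: f w.
Proof. rewrite mulmx_sumr; apply: eq_bigr => w _; by rewrite scalemxAr. Qed.

Lemma Exv_cst (p : Omega -> R) m n (v : 'M[R]_(m, n)) : \sum_w p w = 1 ->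
  \sum_w p w *: v = v.
Proof. by move=> p1; rewrite -scaler_suml p1 scale1r. Qed.

Lemma Exv_sub (p : Omega -> R) m n (f g : Omega -> 'M[R]_(m, n)) :
  \sum_w p w *: (f w - g w) = \sum_w p w *: f w - \sum_w p w *: g w.
Proof. rewrite -sumrB; apply: eq_bigr => w _; by rewrite scalerBr. Qed.

Lemma Ex_coord (p : Omega -> R) n (f : Omega -> 'cV[R]_n) i :
  Ex p (fun w => f w i 0) = Exv p f i 0.
Proof. rewrite /Ex /Exv summxE; apply: eq_bigr => w _; by rewrite mxE. Qed.

Lemma Ex_affine (p : Omega -> R) u a (Y : Omega -> R) : \sum_w p w = 1 ->
  Ex p (fun w => u + a * Y w) = u + a * Ex p Y.
Proof.
move=> p1; rewrite /Ex.
under eq_bigr do rewrite mulrDr.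
rewrite big_split /= -mulr_suml p1 mul1r mulr_sumr; congr (_ + _).
by apply: eq_bigr => w _; rewrite mulrCA.
Qed.

Lemma Var_lin (p : Omega -> R) u a (Y : Omega -> R) hi B : \sum_w p w = 1 ->
  Ex p Y = hi -> Ex p (fun w => (Y w)^+2) <= hi^+2 + B ->
  Var p (fun w => u + a * Y w) <= a^+2 * B.
Proof.
move=> p1 EY EY2; rewrite /Var Ex_affine // EY.
have -> : Ex p (fun w => (u + a * Y w - (u + a * hi)) ^+ 2)
   = a^+2 * (Ex p (fun w => (Y w)^+2) - hi^+2).
  rewrite /Ex mulrBr mulr_sumr.
  have e1 : \sum_w p w * (u + a * Y w - (u + a * hi)) ^+ 2 =
     \sum_w (a ^+ 2 * (p w * Y w ^+ 2) + (- (2 * a^+2 * hi)) * (p w * Y w)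
             + (a^+2 * hi^+2) * p w).
    by apply: eq_bigr => w _; ring.
  rewrite e1 !big_split /= -!mulr_sumr p1.
  have -> : \sum_i p i * Y i = hi by rewrite -EY.

  ring.
apply: ler_wpM2l; first exact: sqr_ge0.
by rewrite lerBlDl.
Qed.

Lemma Pr_compl (p : Omega -> R) (P : pred Omega) : \sum_w p w = 1 ->
  Pr p P = 1 - Pr p (predC P).
Proof.
move=> p1; rewrite -p1 /Pr (bigID P predT) /=.
rewrite addrK; done.
Qed.

Lemma Pr_union (p : Omega -> R) (I : finType) (P : pred Omega) (Q : I -> pred Omega) :
  (forall w, 0 <= p w) -> (forall w, P w -> exists i, Q i w) ->
  Pr p P <= \sum_i Pr p (Q i).
Proof.
move=> p0 hPQ; rewrite /Pr.
rewrite (exchange_big_dep predT) //=.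
apply: (@le_trans _ _ (\sum_(w | P w) \sum_(i | Q i w) p w)).
  apply: ler_sum => w Pw; have [i Qi] := hPQ w Pw.
  by rewrite (bigD1 i) //= lerDl; apply: sumr_ge0.
rewrite [X in _ <= X](bigID P) /= lerDl; apply: sumr_ge0 => w _.
by apply: sumr_ge0.
Qed.

End ProbL.

Section Mat.
Context {R : realType} {n d : nat} (A : 'M[R]_(d, n)) (wt : 'cV[R]_n).

Lemma dg_mul (u v : 'cV[R]_n) : dg u *m dg v = dg (cvmul u v).
Proof.
rewrite /dg mulmx_diag; congr diag_mx; apply/matrixP => i j; by rewrite !mxE.
Qed.

Lemma dgT (u : 'cV[R]_n) : (dg u)^T = dg u.
Proof. exact: tr_diag_mx. Qed.

Lemma dg_sqrt_sq : vpos wt -> dg (cvsqrt wt) *m dg (cvsqrt wt) = dg wt.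
Proof.
move=> wp; rewrite dg_mul; congr dg; apply/matrixP => i j.
rewrite !mxE -expr2 sqr_sqrtr; first by rewrite (ord1 j).
exact: ltW.
Qed.

Lemma M_sym : (A *m dg wt *m A^T)^T = A *m dg wt *m A^T.
Proof. by rewrite !trmx_mul trmxK dgT mulmxA. Qed.

Lemma quad_form (v : 'rV[R]_n) :
  (v *m dg wt *m v^T) 0 0 = \sum_j (v 0 j)^+2 * wt j 0.
Proof.
rewrite /dg mul_mx_diag !mxE; apply: eq_bigr => j _; rewrite !mxE; ring.
Qed.

Lemma M_unit : vpos wt -> \rank A = d -> A *m dg wt *m A^T \in unitmx.
Proof.
move=> wp rk.
have Afree : row_free A by rewrite /row_free rk.
have key : forall u : 'rV[R]_d, u *m (A *m dg wt *m A^T) = 0 -> u = 0.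
  move=> u hu.
  have hq : ((u *m A) *m dg wt *m (u *m A)^T) 0 0 = 0.
    rewrite trmx_mul !mulmxA.
    have -> : u *m A *m dg wt *m A^T = u *m (A *m dg wt *m A^T) by rewrite !mulmxA.
    by rewrite hu mul0mx mxE.
  rewrite quad_form in hq.
  have v0 : u *m A = 0.
    have hj : forall j, (u *m A) 0 j = 0.
      move=> j.
      have h : (u *m A) 0 j ^+ 2 * wt j 0 = 0.
        apply: (psumr_eq0P _ hq) => // k _.
        apply: mulr_ge0; [exact: sqr_ge0 | exact: ltW].
      move/eqP: h; rewrite mulf_eq0 (gt_eqF (wp j)) orbF sqrf_eq0 => /eqP.
      done.
    by apply/matrixP => i j; rewrite (ord1 i) hj mxE.
  by apply/eqP; rewrite -(mulmx_free_eq0 _ Afree); apply/eqP.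
rewrite -row_free_unit -kermx_eq0; apply/eqP/matrixP => i j.
have := key (row i (kermx (A *m dg wt *m A^T))).
rewrite -row_mul mulmx_ker row0 => /(_ erefl) h.
by have := congr1 (fun M : 'rV[R]_d => M 0 j) h; rewrite !mxE.
Qed.

Lemma P_sym : (Ptil A wt)^T = Ptil A wt.
Proof.
by rewrite /Ptil !trmx_mul trmxK trmx_inv M_sym !dgT !mulmxA.
Qed.

Lemma P_idem : vpos wt -> \rank A = d -> Ptil A wt *m Ptil A wt = Ptil A wt.
Proof.
move=> wp rk.
set X := dg (cvsqrt wt) *m A^T *m invmx (A *m dg wt *m A^T).
set Y := A *m dg (cvsqrt wt).
have PE : Ptil A wt = X *m Y by rewrite /Ptil /X /Y mulmxA.
have YX : Y *m X = 1%:M.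
  rewrite /X /Y !mulmxA -(mulmxA A (dg _) (dg _)) dg_sqrt_sq //.
  by rewrite mulmxV // M_unit.
by rewrite PE mulmxA -(mulmxA X Y X) YX mulmx1.
Qed.

End Mat.

Section Scal.
Context {R : realType}.

Lemma frac_le (a b c d : R) : 0 < b -> 0 < d -> a * d <= c * b -> a / b <= c / d.
Proof. by move=> b0 d0 h; rewrite ler_pdivrMr // mulrAC ler_pdivlMr. Qed.

Lemma sqrt_le (c a : R) : 0 <= c -> a <= c ^+ 2 -> Num.sqrt a <= c.
Proof. by move=> c0 h; rewrite -[c]ger0_norm // -sqrtr_sqr ler_sqrt // sqr_ge0. Qed.

Lemma sqrt_ge (c a : R) : 0 <= c -> c ^+ 2 <= a -> c <= Num.sqrt a.
Proof.
move=> c0 h; rewrite -[c]ger0_norm // -sqrtr_sqr ler_sqrt //.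
exact: le_trans (sqr_ge0 c) h.
Qed.

Lemma coord_facts (X S W U t e : R) :
  0 < X -> 0 < S -> 0 < W -> 0 < U -> 0 < t -> 0 < e -> e < (10000%:R)^-1 ->
  (1 - e) * (X * S) <= U -> U <= (1 + e) * (X * S) ->
  (1 - e) * (X / S) <= W -> W <= (1 + e) * (X / S) ->
  (1 - (10%:R)^-1) * t <= X * S -> X * S <= (1 + (10%:R)^-1) * t ->
  let xt := Num.sqrt (W * U) in let st := Num.sqrt (U / W) in
  let Dh := (Num.sqrt (xt * st))^-1 in
  [/\ (X^-1 * (xt * Dh)) ^+ 2 <= 6%:R / (5%:R * t),
      (S^-1 * (st * Dh)) ^+ 2 <= 6%:R / (5%:R * t),
      `|X^-1 * (X - xt)| <= 2 * e,
      `|S^-1 * (S - st)| <= 2 * e &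
      Dh ^+ 2 = U^-1].
Proof.
move=> X0 S0 W0 U0 t0 e0 e1 U1 U2 W1 W2 m1 m2 xt st Dh.
have WS1 : (1 - e) * X <= W * S.
  by move: W1; rewrite mulrA ler_pdivrMr.
have WS2 : W * S <= (1 + e) * X.
  by move: W2; rewrite mulrA ler_pdivlMr.
have xs : xt * st = U.
  rewrite /xt /st -sqrtrM; last by apply: mulr_ge0; apply: ltW.
  have -> : W * U * (U / W) = U ^+ 2 by field; apply: lt0r_neq0.
  by rewrite sqrtr_sqr gtr0_norm.
have xt2 : xt ^+ 2 = W * U by rewrite sqr_sqrtr // mulr_ge0 // ltW.
have st2 : st ^+ 2 = U / W by rewrite sqr_sqrtr // divr_ge0 // ltW.
have Dh2 : Dh ^+ 2 = U^-1 by rewrite /Dh xs exprVn sqr_sqrtr // ltW.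
have e2 : e <= (10000%:R)^-1 by rewrite ltW.
have hW1 : 0 <= W * S - (1 - e) * X by rewrite subr_ge0.
have hW2 : 0 <= (1 + e) * X - W * S by rewrite subr_ge0.
have hU1 : 0 <= U - (1 - e) * (X * S) by rewrite subr_ge0.
have hU2 : 0 <= (1 + e) * (X * S) - U by rewrite subr_ge0.
have hm1 : 0 <= X * S - (1 - (10%:R)^-1) * t by rewrite subr_ge0.
split => //.
- rewrite exprMn exprMn xt2 Dh2 exprVn.
  have -> : (X ^+ 2)^-1 * (W * U * U^-1) = W / X ^+ 2 by field; apply/andP; split; apply: lt0r_neq0.
  apply: frac_le; [by rewrite exprn_gt0 | by rewrite mulr_gt0 | ].
  have := mulr_ge0 (ltW t0) hW2; have := mulr_ge0 (ltW X0) hm1.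
  have := mulr_ge0 (mulr_ge0 (ltW X0) (ltW t0)) (ltW e0).
  have ht : 0 <= X * t := mulr_ge0 (ltW X0) (ltW t0).
  move=> h1 h2 h3.
  rewrite -(ler_pM2r S0).
  nra.
- rewrite exprMn exprMn st2 Dh2 exprVn.
  have -> : (S ^+ 2)^-1 * (U / W * U^-1) = 1 / (S ^+ 2 * W).
    by field; apply/and3P; split; apply: lt0r_neq0.
  apply: frac_le; [by rewrite mulr_gt0 // exprn_gt0 | by rewrite mulr_gt0 | ].
  have h1 := mulr_ge0 (ltW S0) hW1.
  have h2 : 0 <= e * ((1 + (10%:R)^-1) * t - X * S) by rewrite mulr_ge0 ?subr_ge0 // ltW.
  have h3 : 0 <= t * ((10000%:R)^-1 - e) by rewrite mulr_ge0 ?subr_ge0 // ltW.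
  nra.
- have xu : xt <= (1 + e) * X.
    apply: sqrt_le; first nra.
    have h1 := mulr_ge0 (ltW W0) hU2.
    have h2 : 0 <= (1 + e) * X * ((1 + e) * X - W * S).
      apply: mulr_ge0; [nra|nra].
    nra.
  have xl : (1 - e) * X <= xt.
    apply: sqrt_ge; first nra.
    have h1 := mulr_ge0 (ltW W0) hU1.
    have h2 : 0 <= (1 - e) * X * (W * S - (1 - e) * X).
      apply: mulr_ge0; [nra|nra].
    nra.
  rewrite normrM gtr0_norm ?invr_gt0 // mulrC ler_pdivrMr // ler_norml.
  apply/andP; split; nra.
- have su : st <= (1 + 2 * e) * S.
    apply: sqrt_le; first nra.
    rewrite ler_pdivrMr //.
    have ke : 0 <= (1 + 2 * e) ^+ 2 * (1 - e) - (1 + e) by nra.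
    have h1 := mulr_ge0 (mulr_ge0 (sqr_ge0 (1 + 2 * e)) (ltW S0)) hW1.
    have h2 := mulr_ge0 (mulr_ge0 (ltW X0) (ltW S0)) ke.
    nra.
  have sl : (1 - 2 * e) * S <= st.
    apply: sqrt_ge; first nra.
    rewrite ler_pdivlMr //.
    have ke : 0 <= (1 - e) - (1 - 2 * e) ^+ 2 * (1 + e) by nra.
    have h1 := mulr_ge0 (mulr_ge0 (sqr_ge0 (1 - 2 * e)) (ltW S0)) hW2.
    have h2 := mulr_ge0 (mulr_ge0 (ltW X0) (ltW S0)) ke.
    nra.
  rewrite normrM gtr0_norm ?invr_gt0 // mulrC ler_pdivrMr // ler_norml.
  apply/andP; split; nra.
Qed.
End Scal.

Section Scal2.
Context {R : realType}.

Lemma g_coord (U t e c phi Dh : R) : 0 < U -> 0 < t -> 0 < e -> e < (10000%:R)^-1 ->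
  (1 - e) * ((1 - (10%:R)^-1) * t) <= U -> U <= (1 + e) * ((1 + (10%:R)^-1) * t) ->
  Dh ^+ 2 = U^-1 ->
  (Dh * (c * U + phi)) ^+ 2 <= (221%:R / 100%:R) * c ^+ 2 * t + (2223%:R / 1000%:R) * phi ^+ 2 / t.
Proof.
move=> U0 t0 e0 e1 Ul Uu Dh2.
have U0' := lt0r_neq0 U0; have t0' := lt0r_neq0 t0.
rewrite exprMn Dh2 -(ler_pM2r (mulr_gt0 U0 t0)).
have -> : U^-1 * (c * U + phi) ^+ 2 * (U * t) = t * (c * U + phi) ^+ 2.
  by field; rewrite ?U0' ?t0'.
have -> : ((221%:R / 100%:R) * c ^+ 2 * t + (2223%:R / 1000%:R) * phi ^+ 2 / t) * (U * t)
   = (221%:R / 100%:R) * c ^+ 2 * t * t * U + (2223%:R / 1000%:R) * phi ^+ 2 * U.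
  by field; rewrite ?U0' ?t0'.
have h1 : 0 <= c ^+ 2 * t * U * ((221%:R / 100%:R) * t - 2 * U).
  apply: mulr_ge0.
    apply: mulr_ge0; [apply: mulr_ge0; [exact: sqr_ge0| exact: ltW]| exact: ltW].
  rewrite subr_ge0.
  have h' : 0 <= t * ((10000%:R)^-1 - e) by rewrite mulr_ge0 ?subr_ge0 // ltW.
  nra.
have h2 : 0 <= phi ^+ 2 * ((2223%:R / 1000%:R) * U - 2 * t).
  apply: mulr_ge0; first exact: sqr_ge0.
  rewrite subr_ge0.
  have h' : 0 <= t * ((10000%:R)^-1 - e) by rewrite mulr_ge0 ?subr_ge0 // ltW.
  nra.
have h3 : 0 <= t * (c * U - phi) ^+ 2 by rewrite mulr_ge0 ?sqr_ge0 // ltW.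
nra.
Qed.

End Scal2.

Ltac nz := repeat (match goal with |- is_true (_ && _) => apply/andP; split end);
  try (apply: lt0r_neq0); try lra.

Section Scal3.
Context {R : realType}.

Lemma mu1 (m U c e : R) : 0 < m -> (1 - e) * m <= U -> U <= (1 + e) * m ->
  (m^-1 * (c * U - c * m)) ^+ 2 <= c ^+ 2 * e ^+ 2.
Proof.
move=> m0 U1 U2.
have -> : m^-1 * (c * U - c * m) = c * (U / m - 1) by field; rewrite lt0r_neq0.
rewrite exprMn; apply: ler_wpM2l; first exact: sqr_ge0.
have a1 : (1 - e) <= U / m by rewrite ler_pdivlMr.
have a2 : U / m <= (1 + e) by rewrite ler_pdivrMr.
nra.
Qed.

Lemma mu2 (m phi c t : R) : 0 < t -> (1 - (10%:R)^-1) * t <= m ->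
  (m^-1 * (c * m + phi)) ^+ 2 <= 2 * c ^+ 2 + (200%:R / 81%:R) * phi ^+ 2 / t ^+ 2.
Proof.
move=> t0 mt.
have m0 : 0 < m by apply: lt_le_trans mt; rewrite mulr_gt0 //; lra.
have -> : m^-1 * (c * m + phi) = c + phi / m by field; rewrite lt0r_neq0.
have h : (phi / m) ^+ 2 <= (100%:R / 81%:R) * phi ^+ 2 / t ^+ 2.
  rewrite exprMn exprVn.
  apply: frac_le; [by rewrite exprn_gt0 | by rewrite exprn_gt0 | ].
  have h1 : 0 <= m - (1 - (10%:R)^-1) * t by rewrite subr_ge0.
  have h3 : 0 <= (100%:R / 81%:R) * m ^+ 2 - t ^+ 2 by nra.
  have := mulr_ge0 (sqr_ge0 phi) h3.
  nra.
have h2 : (c + phi / m) ^+ 2 <= 2 * c ^+ 2 + 2 * (phi / m) ^+ 2.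
  have := sqr_ge0 (c - phi / m); nra.
apply: (le_trans h2).
lra.
Qed.

Lemma mu3 (m U phi c t e : R) : 0 < t -> (1 - (10%:R)^-1) * t <= m ->
  0 < U -> U <= (1 + e) * m ->
  `|m^-1 * (c * U + phi)| <= `|c| * (1 + e) + (10%:R / 9%:R) * `|phi| / t.
Proof.
move=> t0 mt U0 U2.
have m0 : 0 < m by apply: lt_le_trans mt; rewrite mulr_gt0 //; lra.
rewrite normrM gtr0_norm ?invr_gt0 //.
have h1 : `|c * U + phi| <= `|c| * U + `|phi|.
  by apply: le_trans (ler_normD _ _) _; rewrite normrM (gtr0_norm U0).
have h2 : m^-1 * `|c * U + phi| <= `|c| * (U / m) + `|phi| / m.
  have -> : `|c| * (U / m) + `|phi| / m = m^-1 * (`|c| * U + `|phi|) by ring.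
  by apply: ler_wpM2l => //; rewrite ltW // invr_gt0.
apply: (le_trans h2); apply: lerD.
  apply: ler_wpM2l; first exact: normr_ge0.
  by rewrite ler_pdivrMr.
rewrite -mulrA [X in _ <= X]mulrC -mulrA [X in _ <= _ * X]mulrC.
apply: ler_wpM2l; first exact: normr_ge0.
rewrite -(mul1r (m^-1)); apply: frac_le => //.
lra.
Qed.

Lemma c_facts (N eps t : R) : 1 <= N -> 0 < eps -> 0 < t ->
  let tn := (1 - eps / (3 * Num.sqrt N)) * t in
  [/\ tn / t - 1 = - (eps / (3 * Num.sqrt N)),
      (tn / t - 1) ^+ 2 * N = eps ^+ 2 / 9%:R,
      `|tn / t - 1| <= eps / 3%:R &
      eps < 1 -> 0 < tn /\ tn <= t].
Proof.
move=> N1 e0 t0 tn.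
have sN : 1 <= Num.sqrt N by rewrite -sqrtr1 ler_sqrt //; lra.
have sN0 : 0 < Num.sqrt N by lra.
have E : tn / t - 1 = - (eps / (3 * Num.sqrt N)).
  by rewrite /tn; field; nz.
have q0 : 0 < eps / (3 * Num.sqrt N) by rewrite divr_gt0 // mulr_gt0.
have q1 : eps / (3 * Num.sqrt N) <= eps / 3%:R.
  apply: frac_le => //; first by rewrite mulr_gt0.
  nra.
split => //.
- rewrite E sqrrN exprMn exprVn exprMn sqr_sqrtr; last lra.
  field; nz.
- by rewrite E normrN gtr0_norm.
- move=> e1; rewrite /tn; split.
    apply: mulr_gt0 => //; rewrite subr_gt0.
    apply: le_lt_trans q1 _; lra.
  nra.
Qed.

End Scal3.

Section VecE.
Context {R : realType} {n d : nat} (A : 'M[R]_(d, n)) (eps lam t : R) (wt mut : 'cV[R]_n).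

Local Notation g := (Dhalf wt mut *m dtil_mu eps lam t mut).
Local Notation h := (Ptil A wt *m g).

Lemma dg_mulE (u v : 'cV[R]_n) i : (dg u *m v) i 0 = u i 0 * v i 0.
Proof. by rewrite /dg mul_diag_mx !mxE. Qed.

Lemma cvmul_dg (u v : 'cV[R]_n) : cvmul u v = dg u *m v.
Proof. by apply/matrixP => i j; rewrite (ord1 j) dg_mulE mxE. Qed.

Lemma dtil_x_E : dtil_x A eps lam t wt mut = dg (xtil wt mut) *m (Dhalf wt mut *m (g - h)).
Proof. by rewrite /dtil_x !mulmxBr !mulmxBl ?mulmx1 ?mul1mx !mulmxA. Qed.

Lemma dtil_s_E : dtil_s A eps lam t wt mut = dg (stil wt mut) *m (Dhalf wt mut *m h).
Proof. by rewrite /dtil_s !mulmxA. Qed.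

Lemma dhat_x_E b (Rm : 'M[R]_(b, n)) : dhat_x A eps lam t wt mut Rm =
  dg (xtil wt mut) *m (Dhalf wt mut *m (g - Rm^T *m Rm *m h)).
Proof. by rewrite /dhat_x !mulmxBr !mulmxBl ?mulmx1 ?mul1mx !mulmxA. Qed.

Lemma dhat_s_E b (Rm : 'M[R]_(b, n)) : dhat_s A eps lam t wt mut Rm =
  dg (stil wt mut) *m (Dhalf wt mut *m (Rm^T *m Rm *m h)).
Proof. by rewrite /dhat_s !mulmxA. Qed.

End VecE.

Section More.
Context {R : realType}.

Lemma sqn_bound' n (u : 'I_n -> R) (v w : 'cV[R]_n) c :
  (forall i, v i 0 = u i * w i 0) -> (forall i, u i ^+ 2 <= c) -> sqn v <= c * sqn w.
Proof.
move=> hv hu; rewrite /sqn mulr_sumr; apply: ler_sum => i _.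
rewrite hv exprMn; apply: ler_wpM2r; [exact: sqr_ge0 | exact: hu].
Qed.

Lemma abs_le_sq (x c : R) : 0 <= c -> x ^+ 2 <= c ^+ 2 -> `|x| <= c.
Proof. by move=> c0 h; rewrite -[c]ger0_norm // -ler_sqr ?normr_ge0 // !real_normK ?num_real. Qed.

Lemma sqn_scale n (k : R) (v : 'cV[R]_n) : sqn (k *: v) = k ^+ 2 * sqn v.
Proof. rewrite /sqn mulr_sumr; apply: eq_bigr => i _; by rewrite mxE exprMn. Qed.

Lemma sqn_gt0 n (v : 'cV[R]_n) : v != 0 -> 0 < sqn v.
Proof.
move=> v0; rewrite lt_def sqn_ge0 andbT; apply/negP => /eqP s0.
move/negP: v0; apply; apply/eqP/matrixP => i j; rewrite (ord1 j) mxE.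
have := psumr_eq0P (P := predT) (fun i _ => sqr_ge0 (v i 0)) s0 (i := i) isT.
by move/eqP; rewrite sqrf_eq0 => /eqP.
Qed.

Lemma sqn_unit n (a : R) (v : 'cV[R]_n) : v != 0 ->
  sqn ((- a / norm2 v) *: v) = a ^+ 2.
Proof.
move=> v0; have s0 := @sqn_gt0 _ v v0.
rewrite sqn_scale /norm2 exprMn sqrrN exprVn sqr_sqrtr ?ltW //.
by rewrite -mulrA mulVf ?mulr1 // lt0r_neq0.
Qed.

Lemma sum_cst n (a : R) : \sum_(i < n) a = n%:R * a.
Proof. by rewrite sumr_const card_ord mulr_natl. Qed.

End More.



Section More2.
Context {R : realType}.
Lemma sum_affine n (a k : R) (v : 'cV[R]_n) :
  \sum_i (a + k * (v i 0) ^+ 2) = n%:R * a + k * sqn v.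
Proof. by rewrite big_split /= sum_cst /sqn mulr_sumr. Qed.

Lemma tri_x (a gi hi y T eps : R) : `|a * (gi - hi)| <= eps -> `|y - hi| <= T ->
  `|a| * T <= eps -> `|a * (gi - y)| <= 3%:R * eps.
Proof.
move=> h1 h2 h3.
have -> : a * (gi - y) = a * (gi - hi) - a * (y - hi) by ring.
apply: le_trans (ler_normB _ _) _.
have : `|a * (y - hi)| <= eps.
  rewrite normrM; apply: le_trans h3; apply: ler_wpM2l => //; exact: normr_ge0.
have := normr_ge0 (a * (gi - hi)); lra.
Qed.

Lemma tri_s (a hi y T eps : R) : `|a * hi| <= eps -> `|y - hi| <= T ->
  `|a| * T <= eps -> `|a * y| <= 3%:R * eps.
Proof.
move=> h1 h2 h3.
have -> : a * y = a * hi + a * (y - hi) by ring.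
apply: le_trans (ler_normD _ _) _.
have : `|a * (y - hi)| <= eps.
  rewrite normrM; apply: le_trans h3; apply: ler_wpM2l => //; exact: normr_ge0.
have := normr_ge0 (a * hi); lra.
Qed.
End More2.


Section Ent.
Context {R : realType} {n : nat}.
Lemma cvinvE (u : 'cV[R]_n) i : cvinv u i 0 = (u i 0)^-1. Proof. by rewrite mxE. Qed.
Lemma cvmulE (u v : 'cV[R]_n) i : cvmul u v i 0 = u i 0 * v i 0. Proof. by rewrite mxE. Qed.
Lemma addE (u v : 'cV[R]_n) i : (u + v) i 0 = u i 0 + v i 0. Proof. by rewrite mxE. Qed.
Lemma subE (u v : 'cV[R]_n) i : (u - v) i 0 = u i 0 - v i 0. Proof. by rewrite !mxE. Qed.
Lemma sclE k (u : 'cV[R]_n) i : (k *: u) i 0 = k * u i 0. Proof. by rewrite mxE. Qed.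
End Ent.

Section Fin.
Context {R : realType}.
Lemma le_2x (x : R) : 0 <= x -> x <= 2 * x.
Proof. move=> h; lra. Qed.
Lemma fin3e (c e eps a t : R) : `|c| <= eps / 3%:R -> 0 <= e -> e <= 1 -> 0 < t ->
  a / t <= eps / 2 -> `|c| * (1 + e) + 10%:R / 9%:R * a / t <= 5%:R * eps.
Proof.
move=> hc e0 e1 t0 ha.
have h1 : `|c| * (1 + e) <= eps / 3%:R * 2.
  apply: ler_pM; [exact: normr_ge0 | lra | exact: hc | lra].
have -> : 10%:R / 9%:R * a / t = 10%:R / 9%:R * (a / t) by ring.
have := normr_ge0 c; lra.
Qed.
End Fin.

Theorem lemmaB16 (R : realType) (n d b : nat) (A : 'M[R]_(d, n))
  (eps epsmp lam t : R) (xb sb wt mut : 'cV[R]_n)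
  (Omega : finType) (p : Omega -> R) (Rm : Omega -> 'M[R]_(b, n)) :
  (2 <= n)%N -> (d <= n)%N -> \rank A = d ->
  0 < eps < (10000%:R)^-1 -> 0 < epsmp < (10000%:R)^-1 ->
  ln (n%:R : R) < lam -> 0 < t ->
  vpos xb -> vpos sb -> vpos wt -> vpos mut ->
  approx mut epsmp (mubar xb sb) -> approx wt epsmp (wbar xb sb) ->
  approx (mubar xb sb) (10%:R)^-1 (const_mx t) ->
  gradPhi lam (rvec t mut) != 0 ->
  1000%:R * (ln (n%:R : R)) ^+ 2 <= b%:R ->
  (* R is a random matrix: a finite probability distribution p on Omega *)
  (forall w, 0 <= p w) -> \sum_w p w = 1 ->
  (* the stated properties of the subsampled randomized Hadamard transform *)
  (forall h : 'cV[R]_n, Exv p (fun w => (Rm w)^T *m Rm w *m h) = h) ->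
  (forall (h : 'cV[R]_n) (i : 'I_n),
     Ex p (fun w => (((Rm w)^T *m Rm w *m h) i 0) ^+ 2)
       <= (h i 0) ^+ 2 + (b%:R)^-1 * norm2 h ^+ 2) ->
  (forall (h : 'cV[R]_n) (i : 'I_n) (del : R), 0 < del < 1 ->
     Pr p (fun w => norm2 h * ln (n%:R / del) / Num.sqrt b%:R
                      < `|((Rm w)^T *m Rm w *m h) i 0 - h i 0|) <= del) ->
  (* 1. *)
  (norm2 (cvmul (cvinv sb) (dtil_s A eps lam t wt mut)) <= 2 * eps /\
    norm2 (cvmul (cvinv xb) (dtil_x A eps lam t wt mut)) <= 2 * eps) /\
  [/\
      norm2 (Exv p (fun w => cvmul (cvinv sb) (dhat_s A eps lam t wt mut (Rm w)))) <= 2 * eps,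
      norm2 (Exv p (fun w => cvmul (cvinv xb) (dhat_x A eps lam t wt mut (Rm w)))) <= 2 * eps,
      norm2 (cvmul (cvinv (mubar xb sb)) (dtil_t eps t mut - dbar_t eps t xb sb))
        <= epsmp * eps &
      norm2 (cvmul (cvinv (mubar xb sb)) (dbar_t eps t xb sb + dtil_Phi eps lam t mut))
        <= 5 * eps]
  /\
  (* 2. *)
  (forall i : 'I_n,
     Var p (fun w => (dhat_x A eps lam t wt mut (Rm w)) i 0 / xb i 0) <= 2 * eps ^+ 2 / b%:R
     /\ Var p (fun w => (dhat_s A eps lam t wt mut (Rm w)) i 0 / sb i 0) <= 2 * eps ^+ 2 / b%:R)
  /\
  (* 3. *)
  [/\ norminf (cvmul (cvinv xb) (xb - xtil wt mut)) <= 2 * epsmp,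
      norminf (cvmul (cvinv sb) (sb - stil wt mut)) <= 2 * epsmp,
      norminf (cvmul (cvinv xb) (dtil_x A eps lam t wt mut)) <= 2 * eps,
      norminf (cvmul (cvinv sb) (dtil_s A eps lam t wt mut)) <= 2 * eps &
      norminf (cvmul (cvinv (mubar xb sb)) (dtil_mu eps lam t mut)) <= 5 * eps]
  /\
  (* 4. *)
  1 - (n%:R ^+ 4)^-1 <=
    Pr p (fun w =>
      (norminf (cvmul (cvinv xb) (dhat_x A eps lam t wt mut (Rm w))) <= 3 * eps)
      && (norminf (cvmul (cvinv sb) (dhat_s A eps lam t wt mut (Rm w))) <= 3 * eps)).
Proof.
move=> n2 dn rk /andP[e0 e1] /andP[em0 em1] lnl t0 xp sp wp mp aU aW aM gnz bb p0 p1 hE hV hT.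
pose xt := xtil wt mut; pose st := stil wt mut.
pose Dv := cvinv (cvsqrt (cvmul xt st)).
pose dmu := dtil_mu eps lam t mut.
pose g := Dhalf wt mut *m dmu; pose h := Ptil A wt *m g.
pose al := fun i => (xb i 0)^-1 * (xt i 0 * Dv i 0).
pose be := fun i => (sb i 0)^-1 * (st i 0 * Dv i 0).
have e1' : eps < 1 by apply: (lt_trans e1); rewrite invf_lt1 // ltr1n.
have CF : forall i, [/\ al i ^+ 2 <= 6%:R / (5%:R * t),
      be i ^+ 2 <= 6%:R / (5%:R * t),
      `|(xb i 0)^-1 * (xb i 0 - xt i 0)| <= 2 * epsmp,
      `|(sb i 0)^-1 * (sb i 0 - st i 0)| <= 2 * epsmp &
      Dv i 0 ^+ 2 = (mut i 0)^-1].
  move=> i; have [u1 u2] := aU i; have [w1 w2] := aW i; have [m1 m2] := aM i.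
  rewrite !mxE in u1 u2 w1 w2 m1 m2.
  rewrite /al /be /Dv /xt /st /xtil /stil /cvinv /cvsqrt /cvmul !mxE.
  have := (coord_facts _ _ _ _ _ _ (xp i) (sp i) (wp i) (mp i) t0 em0 em1 u1 u2 w1 w2 m1 m2). exact.
have ha : forall i, al i ^+ 2 <= 6%:R / (5%:R * t) by move=> i; case: (CF i).
have hb : forall i, be i ^+ 2 <= 6%:R / (5%:R * t) by move=> i; case: (CF i).
have hD : forall i, Dv i 0 ^+ 2 = (mut i 0)^-1 by move=> i; case: (CF i).
have scx : forall (v : 'cV[R]_n) i,
    (cvmul (cvinv xb) (dg xt *m (Dhalf wt mut *m v))) i 0 = al i * v i 0.
  by move=> v i; rewrite /Dhalf cvmul_dg !dg_mulE cvinvE /al !mulrA.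
have scx' : forall (v : 'cV[R]_n) i,
    (dg xt *m (Dhalf wt mut *m v)) i 0 / xb i 0 = al i * v i 0.
  by move=> v i; rewrite /Dhalf !dg_mulE /al mulrC !mulrA.
have scs : forall (v : 'cV[R]_n) i,
    (cvmul (cvinv sb) (dg st *m (Dhalf wt mut *m v))) i 0 = be i * v i 0.
  by move=> v i; rewrite /Dhalf cvmul_dg !dg_mulE cvinvE /be !mulrA.
have scs' : forall (v : 'cV[R]_n) i,
    (dg st *m (Dhalf wt mut *m v)) i 0 / sb i 0 = be i * v i 0.
  by move=> v i; rewrite /Dhalf !dg_mulE /be mulrC !mulrA.
have n1 : (1 : R) <= n%:R by rewrite ler1n; apply: ltnW.
have [cE cN cabs ctn] := c_facts _ _ _ n1 e0 t0.
have [tn0 tnt] := ctn e1'.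
pose c := tnew (n:=n) eps t / t - 1.
have sphi : sqn (dtil_Phi eps lam t mut) = (eps / 2 * tnew (n:=n) eps t) ^+ 2.
  by rewrite /dtil_Phi sqn_unit.
have gE : forall i, g i 0 = Dv i 0 * (c * mut i 0 + dtil_Phi eps lam t mut i 0).
  by move=> i; rewrite /g /Dhalf dg_mulE /dmu /dtil_mu /dtil_t addE sclE.
have Ubd : forall i, (1 - epsmp) * ((1 - (10%:R)^-1) * t) <= mut i 0 /\
    mut i 0 <= (1 + epsmp) * ((1 + (10%:R)^-1) * t).
  move=> i; have [u1 u2] := aU i; have [m1 m2] := aM i.
  rewrite !mxE in u1 u2 m1 m2.
  have ep1 : 0 <= 1 - epsmp by rewrite subr_ge0 ltW // (lt_trans em1) // invf_lt1 // ltr1n.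
  split.
    apply: le_trans u1; apply: ler_wpM2l => //.
  apply: le_trans u2 _; apply: ler_wpM2l => //; rewrite addr_ge0 // ltW //.
have cN' : c ^+ 2 * n%:R = eps ^+ 2 / 9%:R := cN.
have cabs' : `|c| <= eps / 3%:R := cabs.
have tn0' : 0 < tnew (n:=n) eps t := tn0.
have tnt' : tnew (n:=n) eps t <= t := tnt.
pose phi := dtil_Phi eps lam t mut.
have gi : forall i, (g i 0) ^+ 2 <= (221%:R / 100%:R) * c ^+ 2 * t +
      (2223%:R / 1000%:R) / t * (phi i 0) ^+ 2.
  move=> i; rewrite gE; have [U1 U2] := Ubd i.
  rewrite [X in _ <= _ + X]mulrAC.
  exact: (g_coord _ _ _ _ _ _ (mp i) t0 em0 em1 U1 U2 (hD i)).
have Gb : sqn g <= (81%:R / 100%:R) * eps ^+ 2 * t.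
  apply: (le_trans (ler_sum _ (fun i _ => gi i))).
  rewrite sum_affine sphi.
  have -> : n%:R * (221%:R / 100%:R * c ^+ 2 * t) = 221%:R / 100%:R * t * (c ^+ 2 * n%:R) by ring.
  rewrite cN'.
  have h1 : (eps / 2 * tnew (n:=n) eps t) ^+ 2 <= (eps / 2 * t) ^+ 2.
    have q1 : 0 <= eps / 2 * tnew (n:=n) eps t by rewrite mulr_ge0 // ?divr_ge0 // ltW.
    have q2 : eps / 2 * tnew (n:=n) eps t <= eps / 2 * t by rewrite ler_wpM2l // divr_ge0 // ltW.
    rewrite ler_sqr ?nnegrE //; exact: le_trans q1 q2.
  have h2 : 2223%:R / 1000%:R / t * (eps / 2 * tnew (n:=n) eps t) ^+ 2 <=
            2223%:R / 1000%:R / t * (eps / 2 * t) ^+ 2.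
    apply: ler_wpM2l h1; apply: divr_ge0; [apply: divr_ge0; apply: ler0n | exact: ltW].
  have e2 : 2223%:R / 1000%:R / t * (eps / 2 * t) ^+ 2 = (2223%:R / 4000%:R) * (eps ^+ 2 * t).
    by field; rewrite lt0r_neq0.
  rewrite e2 in h2.
  have -> : 221%:R / 100%:R * t * (eps ^+ 2 / 9%:R) = (221%:R / 900%:R) * (eps ^+ 2 * t).
    by field.
  have -> : (81%:R / 100%:R) * eps ^+ 2 * t = (81%:R / 100%:R) * (eps ^+ 2 * t) by ring.
  have hX : 0 <= eps ^+ 2 * t by rewrite mulr_ge0 ?sqr_ge0 // ltW.
  clear - h2 hX; lra.
have t0' : 0 <= 6%:R / (5%:R * t) by rewrite divr_ge0 ?ler0n // mulr_ge0 ?ler0n // ltW.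
have K6 : 6%:R / (5%:R * t) * sqn g <= eps ^+ 2.
  apply: le_trans (ler_wpM2l t0' Gb) _.
  have -> : 6%:R / (5%:R * t) * (81%:R / 100%:R * eps ^+ 2 * t) = (486%:R / 500%:R) * eps ^+ 2.
    by field; rewrite lt0r_neq0.
  have hX := sqr_ge0 eps; clear - hX; lra.
have [hh hgh] := sqn_le_split _ _ g (P_sym A wt) (P_idem A wt wp rk).
have e2e : eps ^+ 2 <= (2 * eps) ^+ 2 by rewrite exprMn; have hX := sqr_ge0 eps; clear - hX; lra.
have bnd : forall (u : 'I_n -> R) (v w : 'cV[R]_n), (forall i, v i 0 = u i * w i 0) ->
    (forall i, u i ^+ 2 <= 6%:R / (5%:R * t)) -> sqn w <= sqn g -> norm2 v <= 2 * eps.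
  move=> u v w hv hu hw; apply: norm2_le; first by rewrite mulr_ge0 // ltW.
  apply: le_trans (sqn_bound' _ _ _ _ _ hv hu) _.
  apply: le_trans (ler_wpM2l t0' hw) _.
  exact: le_trans K6 e2e.
have kal : forall i (w : 'cV[R]_n), sqn w <= sqn g -> `|al i * w i 0| <= eps.
  move=> i w hw; apply: abs_le_sq; first exact: ltW.
  rewrite exprMn; apply: le_trans (ler_wpM2l (sqr_ge0 _) (coord_le_sqn _ w i)) _.
  apply: le_trans (ler_wpM2l (sqr_ge0 _) hw) _.
  apply: le_trans (ler_wpM2r (sqn_ge0 _ g) (ha i)) _; exact: K6.
have kbe : forall i (w : 'cV[R]_n), sqn w <= sqn g -> `|be i * w i 0| <= eps.
  move=> i w hw; apply: abs_le_sq; first exact: ltW.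
  rewrite exprMn; apply: le_trans (ler_wpM2l (sqr_ge0 _) (coord_le_sqn _ w i)) _.
  apply: le_trans (ler_wpM2l (sqr_ge0 _) hw) _.
  apply: le_trans (ler_wpM2r (sqn_ge0 _ g) (hb i)) _; exact: K6.
have C1a : norm2 (cvmul (cvinv sb) (dtil_s A eps lam t wt mut)) <= 2 * eps.
  by apply: (bnd be _ h) => // i; rewrite dtil_s_E scs.
have C1b : norm2 (cvmul (cvinv xb) (dtil_x A eps lam t wt mut)) <= 2 * eps.
  by apply: (bnd al _ (g - h)) => // i; rewrite dtil_x_E scx.
pose Ms := dg (cvinv sb) *m dg st *m Dhalf wt mut.
pose Mx := dg (cvinv xb) *m dg xt *m Dhalf wt mut.
have EXs : Exv p (fun w => cvmul (cvinv sb) (dhat_s A eps lam t wt mut (Rm w)))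
    = cvmul (cvinv sb) (dtil_s A eps lam t wt mut).
  rewrite /Exv (eq_bigr (fun w => p w *: (Ms *m ((Rm w)^T *m Rm w *m h)))); last first.
    by move=> w _; rewrite dhat_s_E cvmul_dg /Ms /h /g !mulmxA.
  rewrite Exv_mulmx; have := hE h; rewrite /Exv => ->.
  by rewrite dtil_s_E cvmul_dg /Ms /h /g !mulmxA.
have EXx : Exv p (fun w => cvmul (cvinv xb) (dhat_x A eps lam t wt mut (Rm w)))
    = cvmul (cvinv xb) (dtil_x A eps lam t wt mut).
  rewrite /Exv (eq_bigr (fun w => p w *: (Mx *m (g - (Rm w)^T *m Rm w *m h)))); last first.
    by move=> w _; rewrite dhat_x_E cvmul_dg /Mx /h /g !mulmxA.
  rewrite Exv_mulmx Exv_sub Exv_cst //; have := hE h; rewrite /Exv => ->.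
  by rewrite dtil_x_E cvmul_dg /Mx /h /g !mulmxA.
have C1c : norm2 (Exv p (fun w => cvmul (cvinv sb) (dhat_s A eps lam t wt mut (Rm w)))) <= 2 * eps.
  by rewrite EXs.
have C1d : norm2 (Exv p (fun w => cvmul (cvinv xb) (dhat_x A eps lam t wt mut (Rm w)))) <= 2 * eps.
  by rewrite EXx.
have ep1 : 0 <= 1 - epsmp by rewrite subr_ge0 ltW // (lt_trans em1) // invf_lt1 // ltr1n.
have mpos : forall i, 0 < xb i 0 * sb i 0 by move=> i; rewrite mulr_gt0.
have C1e : norm2 (cvmul (cvinv (mubar xb sb)) (dtil_t eps t mut - dbar_t eps t xb sb))
        <= epsmp * eps.
  apply: norm2_le; first by rewrite mulr_ge0 // ltW.
  apply: (@le_trans _ _ (\sum_(i < n) (c ^+ 2 * epsmp ^+ 2))).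
    apply: ler_sum => i _.
    rewrite cvmulE cvinvE subE /dtil_t /dbar_t !sclE /mubar cvmulE.
    have [u1 u2] := aU i; rewrite /mubar cvmulE in u1 u2.
    exact: (mu1 _ _ _ _ (mpos i) u1 u2).
  rewrite sum_cst.
  have -> : n%:R * (c ^+ 2 * epsmp ^+ 2) = c ^+ 2 * n%:R * epsmp ^+ 2 by ring.
  rewrite cN' exprMn.
  have hX : 0 <= eps ^+ 2 * epsmp ^+ 2 by rewrite mulr_ge0 // sqr_ge0.
  have -> : eps ^+ 2 / 9%:R * epsmp ^+ 2 = (eps ^+ 2 * epsmp ^+ 2) / 9%:R by ring.
  rewrite mulrC; clear - hX; lra.
have sphi' : sqn phi <= (eps / 2 * t) ^+ 2.
  rewrite /phi sphi.
  have q1 : 0 <= eps / 2 * tnew (n:=n) eps t by rewrite mulr_ge0 // ?divr_ge0 // ltW.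
  have q2 : eps / 2 * tnew (n:=n) eps t <= eps / 2 * t by rewrite ler_wpM2l // divr_ge0 // ltW.
  rewrite ler_sqr ?nnegrE //; exact: le_trans q1 q2.
have phib : forall i, `|phi i 0| <= eps / 2 * t.
  move=> i; apply: abs_le_sq; first by rewrite mulr_ge0 ?divr_ge0 // ltW.
  exact: le_trans (coord_le_sqn _ phi i) sphi'.
have C1f : norm2 (cvmul (cvinv (mubar xb sb)) (dbar_t eps t xb sb + dtil_Phi eps lam t mut))
        <= 5%:R * eps.
  apply: norm2_le; first by rewrite mulr_ge0 // ltW.
  apply: (@le_trans _ _ (\sum_(i < n) (2 * c ^+ 2 + (200%:R / 81%:R) / t ^+ 2 * (phi i 0) ^+ 2))).
    apply: ler_sum => i _.
    rewrite cvmulE cvinvE addE /dbar_t !sclE /mubar cvmulE.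
    have [m1 m2] := aM i; rewrite /mubar !mxE in m1 m2.
    rewrite [X in _ <= _ + X]mulrAC.
    exact: (mu2 _ _ _ _ t0 m1).
  rewrite sum_affine.
  have -> : n%:R * (2 * c ^+ 2) = 2 * (c ^+ 2 * n%:R) by ring.
  rewrite cN'.
  have h2 : (200%:R / 81%:R) / t ^+ 2 * sqn phi <= (200%:R / 81%:R) / t ^+ 2 * (eps / 2 * t) ^+ 2.
    apply: ler_wpM2l sphi'; apply: divr_ge0; [apply: divr_ge0; apply: ler0n | exact: sqr_ge0].
  have e3 : (200%:R / 81%:R) / t ^+ 2 * (eps / 2 * t) ^+ 2 = (50%:R / 81%:R) * eps ^+ 2.
    by field; rewrite lt0r_neq0.
  rewrite e3 in h2.
  have hX := sqr_ge0 eps; rewrite exprMn; clear - h2 hX; lra.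
pose Y := fun w => (Rm w)^T *m Rm w *m h.
have EY : forall i, Ex p (fun w => Y w i 0) = h i 0.
  by move=> i; rewrite (Ex_coord p _ Y) /Y hE.
have EY2 : forall i, Ex p (fun w => (Y w i 0) ^+ 2) <= h i 0 ^+ 2 + (b%:R)^-1 * sqn h.
  move=> i; have := hV h i; rewrite /norm2 sqr_sqrtr //; exact: sqn_ge0.
have binv : 0 <= (b%:R : R)^-1 by rewrite invr_ge0 ler0n.
have C2 : forall i : 'I_n,
     Var p (fun w => (dhat_x A eps lam t wt mut (Rm w)) i 0 / xb i 0) <= 2 * eps ^+ 2 / b%:R
     /\ Var p (fun w => (dhat_s A eps lam t wt mut (Rm w)) i 0 / sb i 0) <= 2 * eps ^+ 2 / b%:R.
  move=> i; split.
    have -> : (fun w => (dhat_x A eps lam t wt mut (Rm w)) i 0 / xb i 0) =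
              (fun w => al i * g i 0 + (- al i) * Y w i 0).
      apply: boolp.funext => w; rewrite dhat_x_E scx' subE /Y; ring.
    apply: le_trans (Var_lin p _ _ _ _ _ p1 (EY i) (EY2 i)) _.
    rewrite sqrrN mulrCA mulrC; apply: ler_wpM2r => //.
    apply: le_trans (ler_wpM2l (sqr_ge0 _) hh) _.
    apply: le_trans (ler_wpM2r (sqn_ge0 _ g) (ha i)) _.
    apply: le_trans K6 _; have hX := sqr_ge0 eps; clear - hX; lra.
  have -> : (fun w => (dhat_s A eps lam t wt mut (Rm w)) i 0 / sb i 0) =
            (fun w => 0 + be i * Y w i 0).
    apply: boolp.funext => w; rewrite dhat_s_E scs' /Y; ring.
  apply: le_trans (Var_lin p _ _ _ _ _ p1 (EY i) (EY2 i)) _.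
  rewrite mulrCA mulrC; apply: ler_wpM2r => //.
  apply: le_trans (ler_wpM2l (sqr_ge0 _) hh) _.
  apply: le_trans (ler_wpM2r (sqn_ge0 _ g) (hb i)) _.
  apply: le_trans K6 _; have hX := sqr_ge0 eps; clear - hX; lra.
have C3 : [/\ norminf (cvmul (cvinv xb) (xb - xtil wt mut)) <= 2 * epsmp,
      norminf (cvmul (cvinv sb) (sb - stil wt mut)) <= 2 * epsmp,
      norminf (cvmul (cvinv xb) (dtil_x A eps lam t wt mut)) <= 2 * eps,
      norminf (cvmul (cvinv sb) (dtil_s A eps lam t wt mut)) <= 2 * eps &
      norminf (cvmul (cvinv (mubar xb sb)) (dtil_mu eps lam t mut)) <= 5%:R * eps].
  have ge2 : 0 <= 2 * eps by rewrite mulr_ge0 // ltW.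
  split; apply: norminf_le.
  - by rewrite mulr_ge0 // ltW.
  - by move=> i; rewrite cvmulE cvinvE subE; case: (CF i).
  - by rewrite mulr_ge0 // ltW.
  - by move=> i; rewrite cvmulE cvinvE subE; case: (CF i).
  - by [].
  - move=> i; rewrite dtil_x_E scx; apply: le_trans (kal i _ hgh) _; exact: le_2x (ltW e0).
  - by [].
  - move=> i; rewrite dtil_s_E scs; apply: le_trans (kbe i _ hh) _; exact: le_2x (ltW e0).
  - by rewrite mulr_ge0 // ltW.
  - move=> i; rewrite cvmulE cvinvE /dtil_mu addE /dtil_t sclE /mubar cvmulE.
    have [m1 m2] := aM i; rewrite /mubar !mxE in m1 m2.
    have [u1 u2] := aU i; rewrite /mubar !mxE in u1 u2.
    apply: le_trans (mu3 _ _ _ _ _ _ t0 m1 (mp i) u2) _.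
    have el1 : epsmp <= 1 by apply: ltW; apply: (lt_trans em1); rewrite invf_lt1 // ltr1n.
    have h2 : `|phi i 0| / t <= eps / 2 by rewrite ler_pdivrMr // mulrAC -ler_pdivrMr // phib.
    exact: (fin3e _ _ _ _ _ cabs' (ltW em0) el1 t0 h2).
pose del : R := (n%:R ^+ 5)^-1.
have nR : (1 : R) < n%:R by rewrite ltr1n.
have n0 : (0 : R) < n%:R by apply: lt_trans nR.
have del01 : 0 < del < 1.
  apply/andP; split; first by rewrite invr_gt0 exprn_gt0.
  by rewrite invf_lt1 ?exprn_gt0 // exprn_egt1.
have lnp : 0 < ln (n%:R : R) := ln_gt0 nR.
pose L := ln (n%:R / del).
have LE : L = 6%:R * ln (n%:R : R).
  by rewrite /L /del invrK -exprS lnXn // mulr_natl.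
have b0 : (0 : R) < b%:R.
  have h0 : (0 : R) < 1000%:R * ln (n%:R : R) ^+ 2 by rewrite mulr_gt0 ?ltr0n // exprn_gt0.
  exact: (lt_le_trans h0 bb).
have hL : L ^+ 2 <= b%:R.
  have h1 : L ^+ 2 <= 1000%:R * ln (n%:R : R) ^+ 2.
    rewrite LE exprMn.
    apply: ler_wpM2r; first exact: sqr_ge0.
    by rewrite -natrX ler_nat.
  exact: (le_trans h1 bb).
pose T := norm2 h * L / Num.sqrt b%:R.
have T0 : 0 <= T.
  rewrite /T mulr_ge0 // ?invr_ge0 ?sqrtr_ge0 // mulr_ge0 ?sqrtr_ge0 //.
  by rewrite LE mulr_ge0 ?ler0n // ltW.
have T2 : T ^+ 2 = sqn h * (L ^+ 2 / b%:R).
  by rewrite /T !exprMn exprVn /norm2 !sqr_sqrtr ?ler0n ?sqn_ge0 // -mulrA.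
have Lb : L ^+ 2 / b%:R <= 1.
  have hbb : (b%:R : R) * (b%:R)^-1 = 1.
    by rewrite mulfV //; exact: (lt0r_neq0 b0).
  clear - hbb hL binv; nra.
have Lb0 : 0 <= L ^+ 2 / b%:R by rewrite divr_ge0 ?sqr_ge0 // ltW.
have hT1 : T ^+ 2 <= sqn g.
  rewrite T2; apply: le_trans hh; rewrite -[X in _ <= X]mulr1.
  by apply: ler_wpM2l => //; exact: sqn_ge0 _ h.
have aT : forall i, `|al i| * T <= eps.
  move=> i; rewrite -(ger0_norm T0) -normrM; apply: abs_le_sq; first exact: ltW.
  rewrite exprMn; apply: le_trans (ler_wpM2l (sqr_ge0 _) hT1) _.
  apply: le_trans (ler_wpM2r (sqn_ge0 _ g) (ha i)) _; exact: K6.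
have bT : forall i, `|be i| * T <= eps.
  move=> i; rewrite -(ger0_norm T0) -normrM; apply: abs_le_sq; first exact: ltW.
  rewrite exprMn; apply: le_trans (ler_wpM2l (sqr_ge0 _) hT1) _.
  apply: le_trans (ler_wpM2r (sqn_ge0 _ g) (hb i)) _; exact: K6.
pose Q := fun (i : 'I_n) (w : Omega) => T < `|Y w i 0 - h i 0|.
pose good := fun w =>
      (norminf (cvmul (cvinv xb) (dhat_x A eps lam t wt mut (Rm w))) <= 3 * eps)
      && (norminf (cvmul (cvinv sb) (dhat_s A eps lam t wt mut (Rm w))) <= 3 * eps).
have e3 : 0 <= 3 * eps by rewrite mulr_ge0 // ltW.
have good_ok : forall w, (forall i, ~~ Q i w) -> good w.
  move=> w hw; apply/andP; split; apply: norminf_le => // i.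
    have hq : `|Y w i 0 - h i 0| <= T by rewrite leNgt; exact: hw.
    have k1 := kal i _ hgh; rewrite subE in k1.
    rewrite dhat_x_E scx subE.
    exact: (tri_x _ _ _ _ _ _ k1 hq (aT i)).
  have hq : `|Y w i 0 - h i 0| <= T by rewrite leNgt; exact: hw.
  have k1 := kbe i _ hh.
  rewrite dhat_s_E scs.
  exact: (tri_s _ _ _ _ _ k1 hq (bT i)).
have hPQ : forall w, predC good w -> exists i, Q i w.
  move=> w /= ng; case: (pickP (fun i => Q i w)) => [i qi | none]; first by exists i.
  by move: ng; rewrite good_ok // => i; rewrite none.
have PU := @Pr_union _ _ p _ (predC good) Q p0 hPQ.
have PQ : \sum_i Pr p (Q i) <= n%:R * del.
  rewrite -sum_cst; apply: ler_sum => i _; exact: (hT h i del del01).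
have nd : n%:R * del = (n%:R ^+ 4)^-1.
  by rewrite /del exprS invfM mulrA mulfV ?mul1r // lt0r_neq0.
have C4 : 1 - (n%:R ^+ 4)^-1 <= Pr p good.
  rewrite (Pr_compl _ _ p1) -nd.
  have H := le_trans PU PQ; clear - H; lra.
split; first by split.
split; first by split.
split; first exact: C2.
by split.
Qed.
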